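(* For every integer $n\ge 0$, \[ \sum_{k=0}^{n}(-4)^k\frac{\binom{n}{k}}{\binom{1+2k}{k}}\,k^2H_{1+2k} =\frac{2n(4n-1)\{2H_{1+2n}-H_n\}}{(4n^2-1)(2n-3)(2n-5)} -\frac{2n(32n^6+160n^5-544n^4-560n^3+1482n^2-382n-17)}{(4n^2-1)^2(2n-3)^2(2n-5)^2}. \]
   Context: For an integer $m\ge 0$, $H_m$ denotes the $m$-th harmonic number: $H_0=0$ and $H_m=\sum_{j=1}^m \frac1j$ for $m\ge1$. $\binom{n}{k}$ is the usual binomial coefficient. *)

(* Defs.v *)
From HB Require Import structures.
From mathcomp Require Import all_boot all_order all_algebra.
Set Implicit Arguments. Unset Strict Implicit. Unset Printing Implicit Defensive.
Import Order.TTheory GRing.Theory Num.Theory.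
Local Open Scope ring_scope.

Definition harm (m : nat) : rat := \sum_(1 <= j < m.+1) (j%:R)^-1.

(* Main.v *)
Set Warnings "-notation-overridden,-ambiguous-paths".
Require Import Defs.
From HB Require Import structures.
From mathcomp Require Import all_boot all_order all_algebra.
From mathcomp Require Import ring lra zify.
Import Order.TTheory GRing.Theory Num.Theory.
Local Open Scope ring_scope.

Definition cc (m k : nat) : rat := (-4 : rat) ^+ k * ('C(m, k)%:R / 'C(1 + 2 * k, k)%:R).
Definition f (n k : nat) : rat := cc n k * (k%:R) ^+ 2 * harm (1 + 2 * k).

Lemma binC_neq0 k : ('C(1 + 2 * k, k)%:R : rat) != 0.
Proof. rewrite pnatr_eq0 -lt0n bin_gt0; lia. Qed.

Lemma cc_rec m k : cc m k.+1 =
  cc m k * (-2 * (m%:R - k%:R) * (k%:R + 2)) / ((k%:R + 1) * (2 * k%:R + 3)).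
Proof.
have h1 : (k.+1%:R * 'C(1 + 2 * k.+1, k.+1)%:R : rat) = (2 * k + 3)%:R * 'C((2 * k).+2, k)%:R.
  rewrite -!natrM; congr (_%:R).
  have -> : (1 + 2 * k.+1 = (2 * k).+3)%N by lia.
  by rewrite -mul_bin_diag /= addn3.
have h2 : ((k.+2)%:R * 'C((2 * k).+2, k)%:R : rat) = (2 * k + 2)%:R * 'C(1 + 2 * k, k)%:R.
  rewrite -!natrM; congr (_%:R).
  have e := mul_bin_down (2 * k).+2 k; rewrite /= in e.
  have e2 : ((2 * k).+2 - k = k.+2)%N by lia. rewrite e2 in e.
  by rewrite add1n addn2 e.
have h3 : ((k.+1)%:R * 'C(m, k.+1)%:R : rat) = (m%:R - k%:R) * 'C(m, k)%:R.
  case: (leqP k m) => hkm.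
    by rewrite -natrB // -!natrM mul_bin_left.
  rewrite !bin_small //; last by apply: ltn_trans hkm _.
  by rewrite !mulr0.
have hC := binC_neq0 k.
have ek1 : (k.+1%:R : rat) = k%:R + 1 by rewrite -addn1 natrD.
have ek2 : (k.+2%:R : rat) = k%:R + 2 by rewrite -addn2 natrD.
have ek3 : ((2 * k + 3)%:R : rat) = 2 * k%:R + 3 by rewrite natrD natrM.
have ek4 : ((2 * k + 2)%:R : rat) = 2 * k%:R + 2 by rewrite natrD natrM.
have nz1 : (k%:R + 1 : rat) != 0 by rewrite -ek1 pnatr_eq0.
have nz2 : (k%:R + 2 : rat) != 0 by rewrite -ek2 pnatr_eq0.
have nz3 : (2 * k%:R + 3 : rat) != 0 by rewrite -ek3 pnatr_eq0 addn3.
have nz4 : (2 * k%:R + 2 : rat) != 0 by rewrite -ek4 pnatr_eq0 addn2.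
rewrite ek1 in h1 h3; rewrite ek2 ek4 in h2; rewrite ek3 in h1.
have e1 : ('C(m, k.+1)%:R : rat) = (m%:R - k%:R) * 'C(m, k)%:R / (k%:R + 1).
  by rewrite -h3 mulrAC divff // mul1r.
have e0 : ('C((2 * k).+2, k)%:R : rat) = (2 * k%:R + 2) * 'C(1 + 2 * k, k)%:R / (k%:R + 2).
  by rewrite -h2 mulrAC divff // mul1r.
have e2 : ('C(1 + 2 * k.+1, k.+1)%:R : rat) = (2 * k%:R + 3) * 'C((2 * k).+2, k)%:R / (k%:R + 1).
  by rewrite -h1 mulrAC divff // mul1r.
rewrite /cc exprS e1 e2 e0.
by field; rewrite nz1 nz2 nz3 nz4 hC.
Qed.

Lemma natS (n : nat) : (n.+1%:R : rat) = n%:R + 1.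
Proof. by rewrite -addn1 natrD. Qed.

Lemma cc_pred n k : cc n k = cc n.+1 k * (n%:R + 1 - k%:R) / (n%:R + 1).
Proof.
have nz : (n%:R + 1 : rat) != 0 by rewrite -natS pnatr_eq0.
have h : ('C(n, k)%:R * (n%:R + 1) : rat) = 'C(n.+1, k)%:R * (n%:R + 1 - k%:R).
  case: (leqP k n.+1) => hk.
    rewrite -natS -natrB // -!natrM; congr (_%:R).
    by rewrite mulnC mul_bin_down /= mulnC.
  rewrite !bin_small //; last by apply: ltn_trans hk.
  by rewrite !mul0r.
have e : ('C(n, k)%:R : rat) = 'C(n.+1, k)%:R * (n%:R + 1 - k%:R) / (n%:R + 1).
  by rewrite -h mulfK.
rewrite /cc e.
by field; rewrite nz binC_neq0.
Qed.

Lemma harmS m : harm m.+1 = harm m + (m%:R + 1)^-1.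
Proof. by rewrite /harm big_nat_recr //= natS. Qed.

Lemma harm_rec k : harm (1 + 2 * k.+1) =
  harm (1 + 2 * k) + (2 * k%:R + 2)^-1 + (2 * k%:R + 3)^-1.
Proof.
have -> : (1 + 2 * k.+1 = (1 + 2 * k).+2)%N by lia.
rewrite [harm (1 + 2 * k).+2]harmS [harm (1 + 2 * k).+1]harmS.
by congr (_ + _^-1 + _^-1); rewrite ?natS ?natrD ?natrM; ring.
Qed.

Definition Ypol (N K : rat) : rat :=
(0 + 612 * N + 904 * N * N - 1196 * N * N * N - 2816 * N * N * N * N - 1424 * N * N * N * N * N - 32 * N * N * N * N * N * N + 64 * N * N * N * N * N * N * N) * K ^+ 0 + (0 - 462 - 974 * N + 1214 * N * N + 3458 * N * N * N + 1596 * N * N * N * N - 24 * N * N * N * N * N + 304 * N * N * N * N * N * N + 192 * N * N * N * N * N * N * N) * K ^+ 1 + (0 - 195 - 2596 * N - 2607 * N * N + 5550 * N * N * N + 10356 * N * N * N * N + 5016 * N * N * N * N * N + 96 * N * N * N * N * N * N - 320 * N * N * N * N * N * N * N) * K ^+ 2 + (0 + 750 + 2369 * N + 31 * N * N - 6684 * N * N * N - 8392 * N * N * N * N - 4208 * N * N * N * N * N - 1104 * N * N * N * N * N * N - 192 * N * N * N * N * N * N * N) * K ^+ 3 + (0 + 15 - 77 * N - 316 * N * N - 16 * N * N * N + 800 * N * N * N * N + 1232 * N * N * N * N * N + 896 * N * N * N * N * N * N + 256 * N * N * N * N * N * N * N) * K ^+ 4 + (0 - 108 - 252 * N + 336 *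 N * N + 1120 * N * N * N + 448 * N * N * N * N - 448 * N * N * N * N * N - 256 * N * N * N * N * N * N) * K ^+ 5.

Definition Dn (N : rat) : rat :=
  (N + 1) * (2 * N - 5) * (2 * N - 3) * (2 * N - 1) * (2 * N + 1) * (2 * N + 3).
Definition Wp (N K : rat) : rat := - 4 * (N + 1) + (8 * N + 7) * K - (4 * N + 3) * K ^+ 2.
Definition Uf (N K : rat) : rat := K * (2 * K + 1) * Wp N K.
Definition Vf (N K : rat) : rat := Ypol N K / ((K + 1) * Dn N).
Definition G (n k : nat) : rat :=
  cc n.+1 k * (Uf n%:R k%:R * harm (1 + 2 * k) + Vf n%:R k%:R).
Definition a0 (N : rat) : rat := N * (4 * N - 1) * (2 * N + 3).
Definition a1 (N : rat) : rat := (N + 1) * (4 * N + 3) * (2 * N - 5).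

Lemma lin_neq0 (n a b : nat) : (a * n != b)%N -> (a%:R * n%:R - b%:R : rat) != 0.
Proof. move=> h; rewrite subr_eq0 -natrM eqr_nat //. Qed.
Lemma lin_neq0' (n a b : nat) : (a%:R * n%:R + b.+1%:R : rat) != 0.
Proof. by rewrite -natrM -natrD pnatr_eq0 addnS. Qed.

Lemma Dn_neq0 n : Dn n%:R != 0.
Proof.
rewrite /Dn !mulf_neq0 //.
- by have := lin_neq0' n 1 0; rewrite mul1r.
- by apply: (lin_neq0 n 2 5); lia.
- by apply: (lin_neq0 n 2 3); lia.
- by apply: (lin_neq0 n 2 1); lia.
- exact: (lin_neq0' n 2 0).
- exact: (lin_neq0' n 2 2).
Qed.


Lemma PA (N K : rat) : a0 N * K ^+ 2 - (4 * N + 3) * (2 * N - 5) * (N + 1 - K) * K ^+ 2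
  = -2 * (N + 1 - K) * (K + 2) * Wp N (K + 1) - K * (2 * K + 1) * Wp N K.
Proof. rewrite /a0 /Wp. ring. Qed.

Lemma PB (N K : rat) : -2 * (N + 1 - K) * (K + 2) * Wp N (K + 1) * (4 * K + 5) * Dn N
   - 4 * (N + 1 - K) * Ypol N (K + 1) - 2 * (2 * K + 3) * Ypol N K = 0.
Proof. rewrite /Dn /Wp /Ypol. ring. Qed.

Lemma key_abs (N K c h W1 Y1 D Y0 U0 : rat) :
  D != 0 -> K + 1 != 0 -> K + 1 + 1 != 0 -> 2 * K + 3 != 0 -> 2 * K + 2 != 0 ->
  N + 1 != 0 ->
  U0 = -2 * (N + 1 - K) * (K + 2) * W1
      - (a0 N * K ^+ 2 - (4 * N + 3) * (2 * N - 5) * (N + 1 - K) * K ^+ 2) ->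
  -2 * (N + 1 - K) * (K + 2) * W1 * (4 * K + 5) * D - 4 * (N + 1 - K) * Y1
    = 2 * (2 * K + 3) * Y0 ->
  a0 N * (c * K ^+ 2 * h) - a1 N * (c * (N + 1 - K) / (N + 1) * K ^+ 2 * h) =
  c * (-2 * (N + 1 - K) * (K + 2)) / ((K + 1) * (2 * K + 3)) *
  ((K + 1) * (2 * (K + 1) + 1) * W1 * (h + (2 * K + 2)^-1 + (2 * K + 3)^-1) +
   Y1 / ((K + 1 + 1) * D)) -
  c * (U0 * h + Y0 / ((K + 1) * D)).
Proof.
move=> nzD nz1 nz2 nz3 nz4 nzn hU hY.
have nz6 : 2 * (2 * K + 3) != 0 by rewrite mulf_neq0 // (_ : 2 = 2%:R) // pnatr_eq0.
have -> : Y0 = (-2 * (N + 1 - K) * (K + 2) * W1 * (4 * K + 5) * D - 4 * (N + 1 - K) * Y1)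
   / (2 * (2 * K + 3)).
  by rewrite hY mulrAC divff // mul1r.
rewrite hU /a0 /a1.
by field; rewrite nzD nz1 nz2 nz3 nz4 nzn.
Qed.

Lemma key n k : a0 n%:R * f n.+1 k - a1 n%:R * f n k = G n k.+1 - G n k.
Proof.
have nzD := Dn_neq0 n.
have nz1 : (k%:R + 1 : rat) != 0 by rewrite -natS pnatr_eq0.
have nz2 : (k%:R + 1 + 1 : rat) != 0 by rewrite -!natS pnatr_eq0.
have nz3 : (2 * k%:R + 3 : rat) != 0 by have := lin_neq0' k 2 2.
have nz4 : (2 * k%:R + 2 : rat) != 0 by have := lin_neq0' k 2 1.
have nzn : (n%:R + 1 : rat) != 0 by rewrite -natS pnatr_eq0.
rewrite /f /G cc_rec harm_rec (cc_pred n k) (natS n) (natS k).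
rewrite /Vf /Uf.
apply: key_abs => //.
  by rewrite PA; ring.
have := PB n%:R k%:R; move/eqP; rewrite subr_eq0 => /eqP e.
exact: e.
Qed.

Definition S n := \sum_(0 <= k < n.+1) f n k.

Lemma sum_rel n : a0 n%:R * S n.+1 - a1 n%:R * S n = - G n 0.
Proof.
have e : S n = \sum_(0 <= k < n.+2) f n k.
  rewrite big_nat_recr //= [f n n.+1]/f /cc bin_small // mul0r mulr0 !mul0r addr0.
  by [].
rewrite e /S !mulr_sumr -sumrB.
rewrite (telescope_sumr_eq (G n)) //; last by move=> k _; exact: key.
rewrite /G /cc (bin_small (ltnSn n.+1)) mul0r mulr0 !mul0r.
by rewrite sub0r.
Qed.

Lemma G0 n : G n 0 = Ypol n%:R 0 / Dn n%:R.
Proof.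
rewrite /G /cc /Uf /Vf !bin0.
move: (harm _) (Ypol _ _) (Dn _) (Wp _ _) => h y d w.
by rewrite expr0 mul1r divr1 mul1r !mul0r !add0r mul1r.
Qed.

Definition Tf (N h1 hn : rat) : rat :=
  (2 * N * (4 * N - 1) * (2 * h1 - hn))
      / ((4 * N ^+ 2 - 1) * (2 * N - 3) * (2 * N - 5))
    - (2 * N * (32 * N ^+ 6 + 160 * N ^+ 5 - 544 * N ^+ 4
                   - 560 * N ^+ 3 + 1482 * N ^+ 2 - 382 * N - 17))
      / ((4 * N ^+ 2 - 1) ^+ 2 * (2 * N - 3) ^+ 2 * (2 * N - 5) ^+ 2).

Lemma T_rel (N h1 hn : rat) :
  Dn N != 0 -> N + 1 != 0 -> 2 * N + 2 != 0 -> 2 * N + 3 != 0 ->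
  4 * N ^+ 2 - 1 != 0 -> 2 * N - 3 != 0 -> 2 * N - 5 != 0 ->
  4 * (N + 1) ^+ 2 - 1 != 0 -> 2 * (N + 1) - 3 != 0 -> 2 * (N + 1) - 5 != 0 ->
  2 * N + 1 != 0 -> 2 * N - 1 != 0 ->
  a0 N * Tf (N + 1) (h1 + (2 * N + 2)^-1 + (2 * N + 3)^-1) (hn + (N + 1)^-1)
  - a1 N * Tf N h1 hn = - (Ypol N 0 / Dn N).
Proof.
move=> h0 h1' h2 h3 h4 h5 h6 h7 h8 h9 h10 h11.
rewrite /Tf /a0 /a1 /Dn /Ypol.
by field; rewrite h1' h2 h3 h4 h5 h6 h7 h10 h11.
Qed.


Lemma base1 : S 1 = Tf 1%:R (harm (1 + 2 * 1)) (harm 1).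
Proof.
rewrite /S /Tf /f /cc /harm !unlock.
apply/eqP. vm_compute. reflexivity.
Qed.

Lemma Tf0 h1 hn : Tf 0%:R h1 hn = 0.
Proof.
have z (x a b c d e : rat) : x = 0 -> 2 * x * a * b / c - 2 * x * d / e = 0.
  by move->; rewrite !mulr0 !mul0r subrr.
by rewrite /Tf; apply: z.
Qed.

Lemma f_k0 n : f n 0 = 0.
Proof.
rewrite /f; move: (cc _ _) (harm _) => c h.
by rewrite mulr0n expr2 !mulr0 mul0r.
Qed.

Lemma main n : S n = Tf n%:R (harm (1 + 2 * n)) (harm n).
Proof.
elim: n => [|n IH].
  by rewrite Tf0 /S big_nat1 f_k0.
case: n IH => [|n] IH; first exact: base1.
set m := n.+1 in IH *.
have nzD := Dn_neq0 m.
have hm1 : (m%:R + 1 : rat) != 0 by rewrite -natS pnatr_eq0.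
have hm2 : (2 * m%:R + 2 : rat) != 0 by have := lin_neq0' m 2 1.
have hm3 : (2 * m%:R + 3 : rat) != 0 by have := lin_neq0' m 2 2.
have hp1 : (2 * m%:R + 1 : rat) != 0 by have := lin_neq0' m 2 0.
have hq1 : (2 * m%:R - 1 : rat) != 0 by apply: (lin_neq0 m 2 1); lia.
have hq3 : (2 * m%:R - 3 : rat) != 0 by apply: (lin_neq0 m 2 3); lia.
have hq5 : (2 * m%:R - 5 : rat) != 0 by apply: (lin_neq0 m 2 5); lia.
have hq4 : (4 * m%:R - 1 : rat) != 0 by apply: (lin_neq0 m 4 1); lia.
set N := (m%:R : rat) in nzD hm1 hm2 hm3 hp1 hq1 hq3 hq5 hq4 IH *.
have h4 : (4 * N ^+ 2 - 1 : rat) != 0.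
  by rewrite (_ : 4 * N ^+ 2 - 1 = (2 * N - 1) * (2 * N + 1)) ?mulf_neq0 //; ring.
have h7 : (4 * (N + 1) ^+ 2 - 1 : rat) != 0.
  by rewrite (_ : 4 * (N + 1) ^+ 2 - 1 = (2 * N + 1) * (2 * N + 3)) ?mulf_neq0 //; ring.
have h8 : (2 * (N + 1) - 3 : rat) != 0.
  by rewrite (_ : 2 * (N + 1) - 3 = 2 * N - 1) //; ring.
have h9 : (2 * (N + 1) - 5 : rat) != 0.
  by rewrite (_ : 2 * (N + 1) - 5 = 2 * N - 3) //; ring.
have ha0 : a0 N != 0.
  by rewrite /a0 !mulf_neq0 // /N pnatr_eq0.
have e1 := sum_rel m.
have e2 := T_rel N (harm (1 + 2 * m)) (harm m) nzD hm1 hm2 hm3 h4 hq3 hq5 h7 h8 h9 hp1 hq1.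
have e3 : a0 N * Tf (N + 1) (harm (1 + 2 * m) + (2 * N + 2)^-1 + (2 * N + 3)^-1)
      (harm m + (N + 1)^-1) - a1 N * S m = a0 N * S m.+1 - a1 N * S m.
  rewrite e1 G0 IH. exact: e2.
move/addIr: e3 => e3.
move/(mulfI ha0): e3 => <-.
by rewrite (natS m) (harm_rec m) (harmS m).
Qed.

Theorem theorem6 (n : nat) :
  \sum_(0 <= k < n.+1)
     (-4 : rat) ^+ k * ('C(n, k)%:R / 'C(1 + 2 * k, k)%:R) * (k%:R) ^+ 2
       * harm (1 + 2 * k)
  = (2 * n%:R * (4 * n%:R - 1) * (2 * harm (1 + 2 * n) - harm n))
      / ((4 * n%:R ^+ 2 - 1) * (2 * n%:R - 3) * (2 * n%:R - 5))
    - (2 * n%:R * (32 * n%:R ^+ 6 + 160 * n%:R ^+ 5 - 544 * n%:R ^+ 4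
                   - 560 * n%:R ^+ 3 + 1482 * n%:R ^+ 2 - 382 * n%:R - 17))
      / ((4 * n%:R ^+ 2 - 1) ^+ 2 * (2 * n%:R - 3) ^+ 2 * (2 * n%:R - 5) ^+ 2).
Proof. exact: (main n). Qed.
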